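(* Let $n_1,n_2,n_3\in\mathbb{N}$, let $\sigma$ be a segment label map on $G=\{1,\dots,n_1\}\times\{1,\dots,n_2\}\times\{1,\dots,n_3\}$, fix any decomposition of $T$ into blocks, let $\tau=\mathrm{LABEL}(\sigma,T)$ and let $\tau'$ be the output of the block-wise method. Then $\tau$ and $\tau'$ are isomorphic with respect to the set of all 2-cells of $T$.
   Context: Voxel grid and segmentation: $G=\{1,\dots,n_1\}\times\{1,\dots,n_2\}\times\{1,\dots,n_3\}$; voxels $v,w$ are adjacent iff $\sum_i|v_i-w_i|=1$. A segment label map is $\sigma:G\to\mathbb{N}=\{1,2,\dots\}$ such that each level set $\sigma^{-1}(l)$ is connected w.r.t. this adjacency. Topological grid: $T=\{1,\dots,2n_1-1\}\times\{1,\dots,2n_2-1\}\times\{1,\dots,2n_3-1\}$; a cell with exactly $j$ odd coordinates is a $j$-cell. Voxel $r$ corresponds to the 3-cell $2r-1$. Two cells are 6-neighbors if they differ by $1$ in exactly one coordinate. For a $j$-cell $t$, $\Gamma(t)$ is the set of 6-neighbors of $t$ in $T$ that are $(j+1)$-cells. Cells $t_1,t_2$ are connected, $t_1\leftrightarrow t_2$, iff there is $t\in T$ with $t_1,t_2\in\Gamma(t)$. Procedure LABEL: for a voxel box $\prod_i\{a_i,\dots,b_i\}\subseteq G$ let $B=\prod_i\{2a_i-1,\dots,2b_i-1\}$ be its cell box. $\mathrm{LABEL}(\sigma,B)$ produces $\lambda:B\to\mathbb{N}_0$: (1) $\lambda(2r-1)=\sigma(r)$ for 3-cells. (2) For $j=2,1,0$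 in this order: for each $j$-cell $t\in B$ let $\theta(t)$ be the set of positive integers occurring exactly once in $(\lambda(s))_{s\in\Gamma(t)}$; $t$ is active iff $\theta(t)\ne\emptyset$, inactive $j$-cells get label $0$; the active $j$-cells of $B$ are partitioned into maximal sets of cells with equal $\theta$ that are connected by $\leftrightarrow$-paths inside the set; these classes are numbered $1,\dots,m_j(B)$ arbitrarily and each active $j$-cell gets its class number. Reference labeling: $\tau=\mathrm{LABEL}(\sigma,T)$. Block-wise method: for each axis $i$ choose odd integers $1=a^i_0<\dots<a^i_{m_i}=2n_i-1$; blocks are the boxes $\prod_i\{a^i_{k_i-1},\dots,a^i_{k_i}\}$. Step 1: $\lambda_B=\mathrm{LABEL}(\sigma,B)$ for each block. Step 2: with blocks ordered $B_1,\dots,B_K$, add offset $\sum_{k'<k}m_j(B_{k'})$ to each positive $j$-cell label of $\lambda_{B_k}$ ($j\in\{0,1,2\}$). Step 3: for $j\in\{1,2\}$, via union–find, unite the labels received in different blocks by any active $j$-cell lying in several blocks, and replace every positive $j$-cell label by its set representative. Step 4: for each 0-cell $t_0$ and each pair of distinct 1-cell labels occurring exactly once among the current labels of $\Gamma(t_0)$, merge the two labels if the corresponding 1-cells bound the same set of current 2-cell labels; if any merge took place at $t_0$, recompute the activity of $t_0$ and set its label to $0$ if inactive. The result is $\tau':T\to\mathbb{N}_0$. Isomorphism w.r.t. $U\subseteq T$: for all $u\in U$, $\tau(u)=0\Leftrightarrow\tau'(u)=0$, and for all $u,v\in U$, $\tau(u)=\tau(v)\Leftrightarrow\tau'(u)=\tau'(v)$.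 *)

(* Defs.v *)
(* Voxels and cells are triples of nats, using the
   paper's 1-based coordinates. *)
From Stdlib Require Import Relations.Relation_Operators.
From mathcomp Require Import all_boot.

Set Implicit Arguments.
Unset Strict Implicit.
Unset Printing Implicit Defensive.

Definition cell := (nat * nat * nat)%type.

Definition cx (c : cell) := c.1.1.
Definition cy (c : cell) := c.1.2.
Definition cz (c : cell) := c.2.

Definition inbox (b : cell * cell) (c : cell) : bool :=
  [&& b.1.1.1 <= cx c <= b.2.1.1, b.1.1.2 <= cy c <= b.2.1.2
    & b.1.2 <= cz c <= b.2.2].

Definition boxseq (b : cell * cell) : seq cell :=
  [seq (xy, z) | xy <- [seq (x, y) | x <- iota b.1.1.1 (b.2.1.1.+1 - b.1.1.1),
                                      y <- iota b.1.1.2 (b.2.1.2.+1 - b.1.1.2)],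
                 z <- iota b.1.2 (b.2.2.+1 - b.1.2)].

Definition Gbox (n1 n2 n3 : nat) : cell * cell := ((1, 1, 1), (n1, n2, n3)).
Definition Tbox (n1 n2 n3 : nat) : cell * cell :=
  ((1, 1, 1), (2 * n1 - 1, 2 * n2 - 1, 2 * n3 - 1)).

Definition absdiff (a b : nat) := (a - b) + (b - a).

Definition adjacent (v w : cell) : bool :=
  absdiff (cx v) (cx w) + absdiff (cy v) (cy w) + absdiff (cz v) (cz w) == 1.

Fixpoint chain (R : cell -> cell -> Prop) (x : cell) (p : seq cell) : Prop :=
  match p with
  | [::] => True
  | y :: p' => R x y /\ chain R y p'
  end.

Definition segment_label_map (n1 n2 n3 : nat) (sigma : cell -> nat) : Prop :=
  (forall r, inbox (Gbox n1 n2 n3) r -> 0 < sigma r) /\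
  (forall r s, inbox (Gbox n1 n2 n3) r -> inbox (Gbox n1 n2 n3) s ->
     sigma r = sigma s ->
     exists p, chain (fun x y => [/\ adjacent x y, inbox (Gbox n1 n2 n3) y
                                  & sigma y = sigma r]) r p /\ last r p = s).

Definition dim (c : cell) : nat := odd (cx c) + odd (cy c) + odd (cz c).

(* the 3-cell corresponding to voxel r *)
Definition vox (r : cell) : cell := (2 * cx r - 1, 2 * cy r - 1, 2 * cz r - 1).

(* Gamma(t): the 6-neighbours of t in T that are (dim t + 1)-cells *)
Definition gamma (inT : cell -> bool) (c : cell) : seq cell :=
  let: (x, y, z) := c in
  filter inT
   ((if ~~ odd x then [:: (x.+1, y, z); (x.-1, y, z)] else [::]) ++
    (if ~~ odd y then [:: (x, y.+1, z); (x, y.-1, z)] else [::]) ++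
    (if ~~ odd z then [:: (x, y, z.+1); (x, y, z.-1)] else [::])).

Definition conn (inT : cell -> bool) (t1 t2 : cell) : Prop :=
  exists t, [/\ inT t, t1 \in gamma inT t & t2 \in gamma inT t].

(* k \in theta(t), where g = Gamma(t): positive k occurring exactly once *)
Definition theta (lam : cell -> nat) (g : seq cell) (k : nat) : bool :=
  (0 < k) && (count (fun s => lam s == k) g == 1).

Definition active (lam : cell -> nat) (g : seq cell) : bool :=
  has (fun s => theta lam g (lam s)) g.

Definition theta_eq (inT : cell -> bool) (lam : cell -> nat) (t u : cell) : Prop :=
  forall k, theta lam (gamma inT t) k = theta lam (gamma inT u) k.

Definition LABEL_level (inT inB : cell -> bool) (lam : cell -> nat) (j : nat)
  : Prop :=
  let A t := [&& inB t, dim t == j & active lam (gamma inT t)] in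
  let same_class t u :=
    exists p, chain (fun x y => [/\ conn inT x y, A y & theta_eq inT lam t y]) t p
              /\ last t p = u in
  (forall t, inB t -> dim t = j -> ~~ active lam (gamma inT t) -> lam t = 0) /\
  exists m,
    (forall t, A t -> 1 <= lam t <= m) /\
    (forall k, 1 <= k <= m -> exists t, A t /\ lam t = k) /\
    (forall t u, A t -> A u -> (lam t = lam u <-> same_class t u)).

(* lam is a possible output of LABEL(sigma, B) (the numbering of classes
   is arbitrary, so LABEL is a relation) *)
Definition is_LABEL (inT : cell -> bool) (sigma : cell -> nat)
  (inB : cell -> bool) (lam : cell -> nat) : Prop :=
  (forall r, inB (vox r) -> lam (vox r) = sigma r) /\
  (forall j, j < 3 -> LABEL_level inT inB lam j).

(* m_j(B): number of classes = largest j-cell label in B *)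
Definition mj (lam : cell -> nat) (b : cell * cell) (j : nat) : nat :=
  \max_(c <- boxseq b | dim c == j) lam c.

Definition valid_axis (N : nat) (a : seq nat) : bool :=
  [&& head 0 a == 1, last 0 a == 2 * N - 1, sorted ltn a & all odd a].

(* the intervals {a_{k-1},...,a_k}; when m = 0 (only for N = 1) the single
   interval {1} *)
Definition intervals (a : seq nat) : seq (nat * nat) :=
  if a is [:: x] then [:: (x, x)] else zip a (behead a).

Definition blocks (a1 a2 a3 : seq nat) : seq (cell * cell) :=
  [seq ((pq.1.1, pq.2.1, r.1), (pq.1.2, pq.2.2, r.2)) |
     pq <- [seq (p, q) | p <- intervals a1, q <- intervals a2],
     r <- intervals a3].

Definition is_rep (gen : nat -> nat -> Prop) (rep : nat -> nat) : Prop :=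
  (forall x y, gen x y -> rep x = rep y) /\
  (forall x y, rep x = rep y -> clos_refl_sym_trans nat gen x y) /\
  (forall x, clos_refl_sym_trans nat gen x (rep x)).

Definition merge (inT : cell -> bool) (lab : cell -> nat) (p : cell * cell)
  : cell -> nat :=
  fun c => if [&& inT c, dim c == 1 & lab c == lab p.2] then lab p.1 else lab c.

Definition merge_pair (inT : cell -> bool) (lab : cell -> nat) (t0 : cell)
  (s1 s2 : cell) : Prop :=
  let g := gamma inT t0 in
  [/\ [&& s1 \in g, s2 \in g, theta lab g (lab s1), theta lab g (lab s2)
          & lab s1 != lab s2] &
      forall k, (k \in map lab (gamma inT s1)) = (k \in map lab (gamma inT s2))].

Definition process0 (inT : cell -> bool) (t0 : cell) (lab lab' : cell -> nat)
  : Prop :=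
  exists ps : seq (cell * cell),
    (forall p, p \in ps -> merge_pair inT lab t0 p.1 p.2) /\
    (forall s1 s2, merge_pair inT lab t0 s1 s2 ->
        ((s1, s2) \in ps) || ((s2, s1) \in ps)) /\
    let lab1 := foldl (merge inT) lab ps in
    lab' = (fun c => if (c == t0) && (ps != [::]) &&
                        ~~ active lab1 (gamma inT t0)
                     then 0 else lab1 c).

Inductive step4 (inT : cell -> bool) : seq cell -> (cell -> nat) -> (cell -> nat) -> Prop :=
| step4_nil lab : step4 inT [::] lab lab
| step4_cons t0 ord lab lab' lab'' :
    process0 inT t0 lab lab' -> step4 inT ord lab' lab'' ->
    step4 inT (t0 :: ord) lab lab''.

Definition blockwise (n1 n2 n3 : nat) (sigma : cell -> nat) (a1 a2 a3 : seq nat)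
  (tau' : cell -> nat) : Prop :=
  let inT := inbox (Tbox n1 n2 n3) in
  exists (bl : seq (cell * cell)) (lam : nat -> cell -> nat)
         (rep1 rep2 : nat -> nat) (tau3 : cell -> nat) (ord : seq cell)
         (tau4 : cell -> nat),
    let bk k := nth ((0, 0, 0), (0, 0, 0)) bl k in
    let off j k := \sum_(k' < k) mj (lam k') (bk k') j in
    let lam2 k c := if (0 < lam k c) && (dim c < 3)
                    then lam k c + off (dim c) k else lam k c in
    let gen j x y := exists k k' c,
        [/\ [&& k < size bl, k' < size bl, k != k', inbox (bk k) c
               & inbox (bk k') c],
            dim c = j & [/\ 0 < lam2 k c, 0 < lam2 k' c, x = lam2 k c
                                                    & y = lam2 k' c]] in
    perm_eq bl (blocks a1 a2 a3) /\
    (forall k, k < size bl -> is_LABEL inT sigma (inbox (bk k)) (lam k)) /\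
    is_rep (gen 1) rep1 /\ is_rep (gen 2) rep2 /\
    (forall c, inT c -> exists k, [/\ k < size bl, inbox (bk k) c &
        tau3 c = if dim c == 1 then (if 0 < lam2 k c then rep1 (lam2 k c) else 0)
                 else if dim c == 2 then (if 0 < lam2 k c then rep2 (lam2 k c) else 0)
                 else lam2 k c]) /\
    perm_eq ord [seq c <- boxseq (Tbox n1 n2 n3) | dim c == 0] /\
    step4 inT ord tau3 tau4 /\
    (forall c, inT c -> tau' c = tau4 c).

Definition iso_on (U : cell -> bool) (tau tau' : cell -> nat) : Prop :=
  (forall u, U u -> (tau u = 0 <-> tau' u = 0)) /\
  (forall u v, U u -> U v -> (tau u = tau v <-> tau' u = tau' v)).

(* Main.v *)
From Stdlib Require Import Relations.Relation_Operators.
From mathcomp Require Import all_boot zify.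
Require Import Defs.

Set Implicit Arguments.
Unset Strict Implicit.
Unset Printing Implicit Defensive.

Lemma odd2 n : odd n = (n %% 2 == 1).
Proof. by rewrite modn2; case: (odd n). Qed.

Lemma path_last x s : path ltn x s -> x <= last x s.
Proof.
elim: s x => [|y s IH] x //= /andP [Hxy Hp].
by apply: leq_trans (IH _ Hp); apply: ltnW.
Qed.

Lemma zipA x s : path ltn x s -> all odd (x :: s) ->
  forall p, p \in zip (x :: s) s ->
  [/\ odd p.1, odd p.2, x <= p.1, p.1 < p.2 & p.2 <= last x s].
Proof.
elim: s x => [|y s IH] x //= /andP [Hxy Hp] /and3P [Ox Oy Os] p.
rewrite inE => /orP [/eqP -> /=|Hin].
  by split => //; apply: path_last.
have [] := IH y Hp ltac:(by rewrite /= Oy Os) p Hin.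
move=> H1 H2 H3 H4 H5; split => //; exact: leq_trans (ltnW Hxy) H3.
Qed.

Lemma zip_cover x s w : path ltn x s -> x <= w -> w < last x s ->
  exists p, p \in zip (x :: s) s /\ p.1 <= w < p.2.
Proof.
elim: s x => [|y s IH] x /=; first by move=> _ H1 H2; lia.
move=> /andP [Hxy Hp] Hxw Hw.
case: (ltnP w y) => Hwy.
  by exists (x, y); rewrite inE eqxx /= Hxw Hwy.
have [p [Hin Hp']] := IH y Hp Hwy Hw.
by exists p; rewrite inE Hin orbT.
Qed.

Definition okc (t v : nat) := v = t \/ (t %% 2 = 0 /\ (v = t.+1 \/ v = t.-1)).

Lemma intervals_bounds N a p : valid_axis N a -> p \in intervals a ->
  [/\ odd p.1, odd p.2, 1 <= p.1, p.1 <= p.2 & p.2 <= 2 * N - 1].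
Proof.
case: a => [|x s] /and4P [/eqP /= Hh /eqP Hl Hs Ho] //.
case: s Hl Hs Ho => [|y s] /= Hl Hs Ho.
  rewrite inE => /eqP -> /=; subst; split => //; lia.
move=> Hin.
have [] := @zipA x (y :: s) Hs Ho p Hin => H1 H2 H3 H4 H5.
split => //; [by rewrite -Hh | exact: ltnW | by rewrite -Hl].
Qed.

Lemma axis_cover N a t y z : valid_axis N a -> okc t y -> okc t z ->
  1 <= y <= 2 * N - 1 -> 1 <= z <= 2 * N - 1 ->
  exists p, p \in intervals a /\ (p.1 <= y <= p.2) && (p.1 <= z <= p.2).
Proof.
case: a => [|x s] /and4P [/eqP /= Hh /eqP Hl Hs Ho] //.
subst x.
case: s Hl Hs Ho => [|y0 s] /= Hl Hs Ho Hy Hz Ry Rz.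
  by exists (1, 1); rewrite inE eqxx /=; lia.
set lo := minn y z.
set w := if (lo %% 2 == 1) && (lo < 2 * N - 1) then lo else lo.-1.
have Hlast : 1 < last y0 s.
  have := path_last (s := y0 :: s) Hs; rewrite /=.
  move: Hs => /= /andP [H1 H2] H3.
  have := path_last H2; lia.
have Hw1 : 1 <= w.
  rewrite /w; case: ifP => /=; rewrite /okc in Hy Hz; lia.
have Hw2 : w < last y0 s.
  rewrite /w; case: ifP => /=; rewrite /okc in Hy Hz; lia.
have [p [Hin Hp]] := @zip_cover 1 (y0 :: s) w Hs Hw1 Hw2.
have [] := @zipA 1 (y0 :: s) Hs Ho p Hin.
rewrite !odd2 => /eqP O1 /eqP O2 H3 H4 H5.
exists p; split => //.
case: p Hin Hp O1 O2 H3 H4 H5 => p1 p2 /= _ Hp O1 O2 H3 H4 H5.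
move: Hp; rewrite /w; case: ifP => /= C; rewrite /okc in Hy Hz; lia.
Qed.
Definition gmove (t s : cell) :=
  [\/ [/\ cx t %% 2 = 0, (cx s = (cx t).+1 \/ cx s = (cx t).-1), cy s = cy t & cz s = cz t],
      [/\ cy t %% 2 = 0, (cy s = (cy t).+1 \/ cy s = (cy t).-1), cx s = cx t & cz s = cz t]
    | [/\ cz t %% 2 = 0, (cz s = (cz t).+1 \/ cz s = (cz t).-1), cx s = cx t & cy s = cy t]].

Lemma gammaP (inT : cell -> bool) t s : s \in gamma inT t -> inT s /\ gmove t s.
Proof.
case: t => [[x y] z]; rewrite /gamma mem_filter => /andP [-> H]; split => //.
move: H; rewrite /gmove /cx /cy /cz /=.
have Mx := modn2 x; have My := modn2 y; have Mz := modn2 z.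
case: (odd x) Mx => Mx; case: (odd y) My => My; case: (odd z) Mz => Mz;
  rewrite /= ?in_nil // !inE;
  repeat (case/orP); move/eqP => ->; 
  first [ apply: Or31; split; rewrite /= ?Mx ?My ?Mz //; by [left | right]
        | apply: Or32; split; rewrite /= ?Mx ?My ?Mz //; by [left | right]
        | apply: Or33; split; rewrite /= ?Mx ?My ?Mz //; by [left | right] ].
Qed.

Definition bk (bl : seq (cell * cell)) k := nth ((0, 0, 0), (0, 0, 0)) bl k.
Definition off bl (lam : nat -> cell -> nat) j k :=
  \sum_(k' < k) mj (lam k') (bk bl k') j.
Definition lam2 bl (lam : nat -> cell -> nat) k c :=
  if (0 < lam k c) && (dim c < 3) then lam k c + off bl lam (dim c) k else lam k c.
Definition gen bl lam j x y := exists k k' c,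
  [/\ [&& k < size bl, k' < size bl, k != k', inbox (bk bl k) c
         & inbox (bk bl k') c],
      dim c = j & [/\ 0 < lam2 bl lam k c, 0 < lam2 bl lam k' c,
                      x = lam2 bl lam k c & y = lam2 bl lam k' c]].

Lemma gmove_ok t s : gmove t s ->
  [/\ okc (cx t) (cx s), okc (cy t) (cy s) & okc (cz t) (cz s)].
Proof.
rewrite /okc; case=> [] [H1 H2 H3 H4]; split; rewrite ?H3 ?H4; by [left | right].
Qed.

Lemma dimE c : dim c = cx c %% 2 + cy c %% 2 + cz c %% 2.
Proof. by rewrite /dim !modn2. Qed.

Lemma gamma2_odd n1 n2 n3 c s : dim c = 2 -> s \in gamma (inbox (Tbox n1 n2 n3)) c ->
  [/\ cx s %% 2 = 1, cy s %% 2 = 1 & cz s %% 2 = 1].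
Proof.
rewrite dimE => Hd /gammaP [].
rewrite /inbox /= => /and3P [/andP [X1 X2] /andP [Y1 Y2] /andP [Z1 Z2]].
case=> [] [H1 H2 H3 H4]; split; lia.
Qed.

Lemma theta_in (f h : cell -> nat) g : (forall s, s \in g -> f s = h s) ->
  theta f g =1 theta h g.
Proof.
move=> H k; rewrite /theta; congr andb; congr (_ == 1).
by apply: eq_in_count => s Hs; rewrite (H s Hs).
Qed.

Lemma active_in (f h : cell -> nat) g : (forall s, s \in g -> f s = h s) ->
  active f g = active h g.
Proof.
move=> H; rewrite /active; apply: eq_in_has => s Hs.
by rewrite (H s Hs) (theta_in H).
Qed.

Lemma chain_impl (R R' : cell -> cell -> Prop) x p :
  (forall a b, R a b -> R' a b) -> chain R x p -> chain R' x p.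
Proof.
move=> H; elim: p x => [|y p IH] x //= [H1 H2]; split; [exact: H | exact: IH].
Qed.

Lemma LL_zero (inT inB : cell -> bool) lam j t : LABEL_level inT inB lam j ->
  inB t -> dim t = j -> (lam t = 0 <-> ~~ active lam (gamma inT t)).
Proof.
move=> [Hz [m [Hb _]]] Ht Hd; split.
  move=> H0; apply/negP => Ha.
  have := Hb t; rewrite /= Ht Hd eqxx Ha /= H0 => /(_ isT); done.
by move=> Hn; apply: Hz.
Qed.

Definition rof (s : cell) : cell := ((cx s).+1 %/ 2, (cy s).+1 %/ 2, (cz s).+1 %/ 2).

Lemma odd_val inT sigma (inB : cell -> bool) lam s : is_LABEL inT sigma inB lam ->
  inB s -> cx s %% 2 = 1 -> cy s %% 2 = 1 -> cz s %% 2 = 1 -> lam s = sigma (rof s).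
Proof.
move=> [H _] Hs O1 O2 O3.
have E : vox (rof s) = s.
  case: s Hs O1 O2 O3 => [[x y] z]; rewrite /vox /rof /cx /cy /cz /= => _ O1 O2 O3.
  congr (_, _, _); lia.
by rewrite -{1}E H // E.
Qed.

Section Main.
Variables (n1 n2 n3 : nat) (sigma : cell -> nat) (a1 a2 a3 : seq nat)
  (tau : cell -> nat) (bl : seq (cell * cell)) (lam : nat -> cell -> nat)
  (rep1 rep2 : nat -> nat) (tau3 : cell -> nat).
Local Notation inT := (inbox (Tbox n1 n2 n3)).
Hypothesis Hv1 : valid_axis n1 a1.
Hypothesis Hv2 : valid_axis n2 a2.
Hypothesis Hv3 : valid_axis n3 a3.
Hypothesis Htau : is_LABEL inT sigma inT tau.
Hypothesis Hbl : perm_eq bl (blocks a1 a2 a3).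
Hypothesis Hlam : forall k, k < size bl -> is_LABEL inT sigma (inbox (bk bl k)) (lam k).

Lemma bk_props k : k < size bl -> exists p q r,
  [/\ p \in intervals a1, q \in intervals a2, r \in intervals a3
    & bk bl k = ((p.1, q.1, r.1), (p.2, q.2, r.2))].
Proof.
move=> Hk; rewrite /bk; have := mem_nth ((0, 0, 0), (0, 0, 0)) Hk.
rewrite (perm_mem Hbl) => /allpairsP [[pq r] [/= Hpq Hr ->]].
case/allpairsP: Hpq => [[p q] [/= Hp Hq ->]].
by exists p, q, r; split.
Qed.

Lemma bk_inT k c : k < size bl -> inbox (bk bl k) c -> inT c.
Proof.
move=> Hk; have [p [q [r [Hp Hq Hr E]]]] := bk_props Hk; rewrite /bk in E *; rewrite E.
have [_ _ P1 P2 P3] := intervals_bounds Hv1 Hp.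
have [_ _ Q1 Q2 Q3] := intervals_bounds Hv2 Hq.
have [_ _ R1 R2 R3] := intervals_bounds Hv3 Hr.
clear E; case: p q r Hp Hq Hr P1 P2 P3 Q1 Q2 Q3 R1 R2 R3 => [p1 p2] [q1 q2] [r1 r2] /= _ _ _.
rewrite /inbox /=; move=> *; apply/and3P; split; apply/andP; split; lia.
Qed.

Lemma bk_gamma k c s : k < size bl -> inbox (bk bl k) c -> s \in gamma inT c ->
  inbox (bk bl k) s.
Proof.
move=> Hk Hc /gammaP [_ Hm]; move: Hc.
have [p [q [r [Hp Hq Hr E]]]] := bk_props Hk; rewrite /bk in E *; rewrite E.
have [P1 P2 _ _ _] := intervals_bounds Hv1 Hp.
have [Q1 Q2 _ _ _] := intervals_bounds Hv2 Hq.
have [R1 R2 _ _ _] := intervals_bounds Hv3 Hr.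
clear E; case: p q r Hp Hq Hr P1 P2 Q1 Q2 R1 R2 => [p1 p2] [q1 q2] [r1 r2] /= _ _ _.
rewrite !odd2 => /eqP P1 /eqP P2 /eqP Q1 /eqP Q2 /eqP R1 /eqP R2.
rewrite /inbox /= => /and3P [/andP [X1 X2] /andP [Y1 Y2] /andP [Z1 Z2]].
apply/and3P; split; apply/andP; split;
  case: Hm => [] [M1 M2 M3 M4]; lia.
Qed.

Lemma find_block t x y : inT x -> inT y ->
  [/\ okc (cx t) (cx x), okc (cy t) (cy x) & okc (cz t) (cz x)] ->
  [/\ okc (cx t) (cx y), okc (cy t) (cy y) & okc (cz t) (cz y)] ->
  exists k, k < size bl /\ inbox (bk bl k) x && inbox (bk bl k) y.
Proof.
rewrite /inbox /= => /and3P [/andP [X1 X2] /andP [Y1 Y2] /andP [Z1 Z2]].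
move=> /and3P [/andP [X1' X2'] /andP [Y1' Y2'] /andP [Z1' Z2']].
move=> [Ox Oy Oz] [Ox' Oy' Oz'].
have [p [Hp /andP [Px Py]]] := axis_cover Hv1 Ox Ox' (ltac:(lia)) (ltac:(lia)).
have [q [Hq /andP [Qx Qy]]] := axis_cover Hv2 Oy Oy' (ltac:(lia)) (ltac:(lia)).
have [r [Hr /andP [Rx Ry]]] := axis_cover Hv3 Oz Oz' (ltac:(lia)) (ltac:(lia)).
set B := ((p.1, q.1, r.1), (p.2, q.2, r.2)).
have HB : B \in bl.
  rewrite (perm_mem Hbl) /B /blocks.
  apply/allpairsP; exists ((p, q), r); split => //.
  by apply/allpairsP; exists (p, q); split.
exists (index B bl); split; first by rewrite index_mem.
rewrite /bk nth_index //= /inbox /=.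
by rewrite Px Py Qx Qy Rx Ry.
Qed.


Lemma F4 k c s : k < size bl -> inbox (bk bl k) c -> dim c = 2 ->
  s \in gamma inT c -> lam k s = tau s.
Proof.
move=> Hk Hc Hd Hs.
have [O1 O2 O3] := gamma2_odd Hd Hs.
have Hsb := bk_gamma Hk Hc Hs.
by rewrite (odd_val (Hlam Hk) Hsb O1 O2 O3) (odd_val Htau (bk_inT Hk Hsb) O1 O2 O3).
Qed.

Lemma act_eq k c : k < size bl -> inbox (bk bl k) c -> dim c = 2 ->
  active (lam k) (gamma inT c) = active tau (gamma inT c).
Proof. move=> Hk Hc Hd; apply: active_in => s; exact: F4. Qed.

Lemma th_eq k c : k < size bl -> inbox (bk bl k) c -> dim c = 2 ->
  theta (lam k) (gamma inT c) =1 theta tau (gamma inT c).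
Proof. move=> Hk Hc Hd; apply: theta_in => s; exact: F4. Qed.

Lemma zero_eq k c : k < size bl -> inbox (bk bl k) c -> dim c = 2 ->
  (lam k c = 0 <-> tau c = 0).
Proof.
move=> Hk Hc Hd.
rewrite (LL_zero ((Hlam Hk).2 2 isT) Hc Hd).
rewrite (LL_zero (Htau.2 2 isT) (bk_inT Hk Hc) Hd).
by rewrite (act_eq Hk Hc Hd).
Qed.

Lemma F5 k c d : k < size bl -> inbox (bk bl k) c -> inbox (bk bl k) d ->
  dim c = 2 -> dim d = 2 -> 0 < lam k c -> lam k c = lam k d -> tau c = tau d.
Proof.
move=> Hk Hc Hd Dc Dd Pc E.
have Pd : 0 < lam k d by rewrite -E.
have [Hz [m [Hb [Hs Hiff]]]] := (Hlam Hk).2 2 isT.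
have [Hz' [m' [Hb' [Hs' Hiff']]]] := Htau.2 2 isT.
have Ac : active (lam k) (gamma inT c).
  by apply/negPn/negP => /(LL_zero ((Hlam Hk).2 2 isT) Hc Dc); lia.
have Ad : active (lam k) (gamma inT d).
  by apply/negPn/negP => /(LL_zero ((Hlam Hk).2 2 isT) Hd Dd); lia.
have := Hiff c d; rewrite /= Hc Hd Dc Dd Ac Ad /= => /(_ isT isT) [H1 _].
have [p [Hch Hl]] := H1 E.
have := Hiff' c d; rewrite /= (bk_inT Hk Hc) (bk_inT Hk Hd) Dc Dd.
rewrite -(act_eq Hk Hc Dc) -(act_eq Hk Hd Dd) Ac Ad /= => /(_ isT isT) [_ H2].
apply: H2; exists p; split => //.
apply: chain_impl Hch => x y [Hxy /and3P [Hy /eqP Dy Ay] Th]; split => //.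
  by rewrite (bk_inT Hk Hy) Dy eqxx -(act_eq Hk Hy Dy) Ay.
by move=> kk; rewrite -(th_eq Hk Hc Dc) -(th_eq Hk Hy Dy).
Qed.

Lemma F6 k x y : k < size bl -> inbox (bk bl k) x -> inbox (bk bl k) y ->
  dim x = 2 -> dim y = 2 -> 0 < tau x -> 0 < tau y -> conn inT x y ->
  theta_eq inT tau x y -> lam k x = lam k y.
Proof.
move=> Hk Hx Hy Dx Dy Px Py Cxy Th.
have [Hz [m [Hb [Hs Hiff]]]] := (Hlam Hk).2 2 isT.
have Ax : active (lam k) (gamma inT x).
  apply/negPn/negP => /(LL_zero ((Hlam Hk).2 2 isT) Hx Dx).
  by move/(zero_eq Hk Hx Dx); lia.
have Ay : active (lam k) (gamma inT y).
  apply/negPn/negP => /(LL_zero ((Hlam Hk).2 2 isT) Hy Dy).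
  by move/(zero_eq Hk Hy Dy); lia.
have := Hiff x y; rewrite /= Hx Hy Dx Dy Ax Ay /= => /(_ isT isT) [_ H1].
apply: H1; exists [:: y]; split => //=; split => //; split => //.
  by rewrite Hy Dy eqxx Ay.
by move=> kk; rewrite (th_eq Hk Hx Dx) (th_eq Hk Hy Dy).
Qed.

Lemma mem_boxseq b c : inbox b c -> c \in boxseq b.
Proof.
case: c => [[x y] z]; rewrite /inbox /boxseq /cx /cy /cz /=.
move=> /and3P [/andP [X1 X2] /andP [Y1 Y2] /andP [Z1 Z2]].
apply/allpairsP; exists ((x, y), z); split => //=; last by rewrite mem_iota; lia.
by apply/allpairsP; exists (x, y); split => //=; rewrite mem_iota; lia.
Qed.

Lemma lam_le_mj k c : inbox (bk bl k) c -> dim c = 2 ->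
  lam k c <= mj (lam k) (bk bl k) 2.
Proof.
move=> Hc Hd; rewrite /mj.
apply: (leq_bigmax_seq c (mem_boxseq Hc)); by rewrite Hd.
Qed.

Lemma off_mono k k' : k < k' ->
  off bl lam 2 k + mj (lam k) (bk bl k) 2 <= off bl lam 2 k'.
Proof.
move=> H; rewrite /off.
set f := fun i => mj (lam i) (bk bl i) 2.
have E : forall n, \sum_(k' < n) mj (lam k') (bk bl k') 2 = \sum_(0 <= i < n) f i.
  by move=> n; rewrite big_mkord.
rewrite !E -big_nat_recr //= [X in _ <= X](@big_cat_nat _ _ _ k.+1) //=.
exact: leq_addr.
Qed.

Lemma lam2E k c : 0 < lam k c -> dim c = 2 -> lam2 bl lam k c = lam k c + off bl lam 2 k.
Proof. by move=> H Hd; rewrite /lam2 H Hd. Qed.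

Lemma lam_pos k c : 0 < lam2 bl lam k c -> 0 < lam k c.
Proof. by rewrite /lam2; case: ifP => [/andP [] //|_]. Qed.

Definition Rl k c x := [/\ k < size bl, inbox (bk bl k) c, dim c = 2, 0 < lam k c
  & x = lam2 bl lam k c].

Lemma U k c k' c' x : Rl k c x -> Rl k' c' x -> tau c = tau c'.
Proof.
move=> [Hk Hc Dc Pc E] [Hk' Hc' Dc' Pc' E'].
move: E E'; rewrite lam2E // lam2E // => -> E.
have M := lam_le_mj Hc Dc; have M' := lam_le_mj Hc' Dc'.
case: (ltngtP k k') => H.
- have := off_mono H; lia.
- have := off_mono H; lia.
- subst k'; apply: (F5 Hk Hc Hc' Dc Dc' Pc); lia.
Qed.

Lemma gen_real x y : gen bl lam 2 x y ->
  exists k c k', Rl k c x /\ Rl k' c y.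
Proof.
move=> [k [k' [c [/and5P [Hk Hk' _ Hc Hc'] Dc [P1 P2 E1 E2]]]]].
exists k, c, k'; split; split => //; exact: lam_pos.
Qed.

Lemma Qlem x y : clos_refl_sym_trans nat (gen bl lam 2) x y ->
  ((exists k c, Rl k c x) <-> (exists k c, Rl k c y)) /\
  (forall k c k' c', Rl k c x -> Rl k' c' y -> tau c = tau c').
Proof.
elim=> {x y}.
- move=> x y /gen_real [k [c [k' [R1 R2]]]]; split.
    by split=> _; [exists k', c | exists k, c].
  move=> k1 c1 k2 c2 H1 H2; rewrite (U H1 R1); exact: (U R2 H2).
- move=> x; split => // k c k' c' R1 R2; exact: U R1 R2.
- move=> x y _ [H1 H2]; split; first by split => H; apply/H1.
  move=> k c k' c' R1 R2; symmetry; exact: H2 R2 R1.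
- move=> x y z _ [H1 H2] _ [H3 H4]; split.
    by split => H; [apply/H3/H1 | apply/H1/H3].
  move=> k c k' c' R1 R2.
  have [kk [d Rd]] : exists k c, Rl k c y by apply/H1; exists k, c.
  by rewrite (H2 _ _ _ _ R1 Rd) (H4 _ _ _ _ Rd R2).
Qed.

Lemma rep_pos x y : clos_refl_sym_trans nat (gen bl lam 2) x y -> (0 < x <-> 0 < y).
Proof.
elim=> {x y} //.
- move=> x y [k [k' [c [_ _ [P1 P2 -> ->]]]]]; by split.
- by move=> x y _ [H1 H2]; split.
- by move=> x y z _ [H1 H2] _ [H3 H4]; split => H; [apply/H3/H1 | apply/H2/H4].
Qed.

Hypothesis Hrep2 : is_rep (gen bl lam 2) rep2.
Hypothesis Htau3 : forall c, inT c -> exists k, [/\ k < size bl, inbox (bk bl k) c &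
        tau3 c = if dim c == 1 then (if 0 < lam2 bl lam k c then rep1 (lam2 bl lam k c) else 0)
                 else if dim c == 2 then (if 0 < lam2 bl lam k c then rep2 (lam2 bl lam k c) else 0)
                 else lam2 bl lam k c].


Lemma lam_pos_tau k c : k < size bl -> inbox (bk bl k) c -> dim c = 2 ->
  0 < tau c -> 0 < lam k c.
Proof.
move=> Hk Hc Hd Ht; case E: (lam k c) => [|//].
by move/(zero_eq Hk Hc Hd): E; lia.
Qed.

Lemma W c k k' : k < size bl -> k' < size bl -> inbox (bk bl k) c ->
  inbox (bk bl k') c -> dim c = 2 -> 0 < tau c ->
  rep2 (lam2 bl lam k c) = rep2 (lam2 bl lam k' c).
Proof.
move=> Hk Hk' Hc Hc' Hd Ht.
case: (eqVneq k k') => [-> //|Hne].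
apply: Hrep2.1; exists k, k', c; split => //.
  by rewrite Hk Hk' Hne Hc Hc'.
have P := lam_pos_tau Hk Hc Hd Ht; have P' := lam_pos_tau Hk' Hc' Hd Ht.
by split => //; rewrite lam2E //; lia.
Qed.

Lemma rep2_pos x : 0 < x -> 0 < rep2 x.
Proof. by move=> H; apply/(rep_pos (Hrep2.2.2 x)). Qed.

Lemma T3 c : inT c -> dim c = 2 ->
  (tau c = 0 -> tau3 c = 0) /\
  (0 < tau c -> forall k, k < size bl -> inbox (bk bl k) c ->
      tau3 c = rep2 (lam2 bl lam k c)).
Proof.
move=> HT Hd; have [k0 [Hk0 Hc0]] := Htau3 HT; rewrite Hd /= => ->.
split.
  move=> /(zero_eq Hk0 Hc0 Hd) H0.
  by rewrite /lam2 H0.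
move=> Ht k Hk Hc.
have P := lam_pos_tau Hk0 Hc0 Hd Ht.
rewrite lam2E // ifT; last by lia.
rewrite -lam2E //; exact: W.
Qed.

Lemma some_block c : inT c -> exists k, k < size bl /\ inbox (bk bl k) c.
Proof.
move=> H.
have O : forall v, okc v v by move=> v; left.
have [k [Hk /andP [Hc _]]] := @find_block c c c H H (And3 (O _) (O _) (O _))
  (And3 (O _) (O _) (O _)).
by exists k.
Qed.

Lemma zero3 u : inT u -> dim u = 2 -> (tau u = 0 <-> tau3 u = 0).
Proof.
move=> HT Hd; have [H1 H2] := T3 HT Hd; split => // H3.
case E: (tau u) => [//|t].
have [k [Hk Hc]] := some_block HT.
have P := lam_pos_tau Hk Hc Hd (ltac:(by rewrite E)).
move: H3; rewrite (H2 (ltac:(by rewrite E)) k Hk Hc) => H3.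
have := rep2_pos (x := lam2 bl lam k u); rewrite H3 lam2E //; lia.
Qed.

Lemma path3 u p x : inT x -> dim x = 2 -> 0 < tau x -> theta_eq inT tau u x ->
  chain (fun a b => [/\ conn inT a b,
     [&& inT b, dim b == 2 & active tau (gamma inT b)] & theta_eq inT tau u b]) x p ->
  tau3 (last x p) = tau3 x.
Proof.
elim: p x => [|y p IH] x //= Hx Dx Px Thx [[Cxy /and3P [Hy /eqP Dy Ay] Thy] Hch].
have Py : 0 < tau y.
  case E: (tau y) => [|//].
  by move: Ay; have := (LL_zero (Htau.2 2 isT) Hy Dy).1 E => /negP.
rewrite (IH y Hy Dy Py Thy Hch).
have [t [Ht Hxt Hyt]] := Cxy.
have [_ Mx] := gammaP Hxt; have [_ My] := gammaP Hyt.
have [k [Hk /andP [Hkx Hky]]] := find_block Hx Hy (gmove_ok Mx) (gmove_ok My).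
have E : lam k x = lam k y.
  apply: (F6 Hk Hkx Hky Dx Dy Px Py Cxy) => kk; by rewrite -Thx -Thy.
rewrite ((T3 Hx Dx).2 Px k Hk Hkx) ((T3 Hy Dy).2 Py k Hk Hky).
by rewrite /lam2 E Dx Dy.
Qed.

Lemma iso3 : iso_on (fun c => inT c && (dim c == 2)) tau tau3.
Proof.
split; first by move=> u /andP [HT /eqP Hd]; exact: zero3.
move=> u v /andP [Hu /eqP Du] /andP [Hv /eqP Dv].
have Zu := zero3 Hu Du; have Zv := zero3 Hv Dv.
case Eu: (tau u) => [|tu]; case Ev: (tau v) => [|tv].
- by rewrite (Zu.1 Eu) (Zv.1 Ev).
- rewrite (Zu.1 Eu); split => // H; symmetry in H; move: (Zv.2 H); by rewrite Ev.
- rewrite (Zv.1 Ev); split => // H; move: (Zu.2 H); by rewrite Eu.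
have Pu : 0 < tau u by rewrite Eu.
have Pv : 0 < tau v by rewrite Ev.
have [Hz' [m' [Hb' [Hs' Hiff']]]] := Htau.2 2 isT.
have Au : active tau (gamma inT u).
  by apply/negPn/negP => /(LL_zero (Htau.2 2 isT) Hu Du); lia.
have Av : active tau (gamma inT v).
  by apply/negPn/negP => /(LL_zero (Htau.2 2 isT) Hv Dv); lia.
have := Hiff' u v; rewrite /= Hu Hv Du Dv Au Av /= => /(_ isT isT) [H1 H2].
rewrite -Eu -Ev; split.
  move=> /H1 [p [Hch Hl]]; rewrite -Hl; symmetry; exact: path3 Hch.
move=> E; apply: H2.
have [ku [Hku Hcu]] := some_block Hu; have [kv [Hkv Hcv]] := some_block Hv.
move: E; rewrite ((T3 Hu Du).2 Pu ku Hku Hcu) ((T3 Hv Dv).2 Pv kv Hkv Hcv) => E.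
have C : clos_refl_sym_trans nat (gen bl lam 2) (lam2 bl lam ku u) (lam2 bl lam kv v).
  apply: rst_trans (Hrep2.2.2 _) _; rewrite E; apply: rst_sym; exact: Hrep2.2.2.
have Ru : Rl ku u (lam2 bl lam ku u) by split => //; exact: lam_pos_tau.
have Rv : Rl kv v (lam2 bl lam kv v) by split => //; exact: lam_pos_tau.
have := (Qlem C).2 _ _ _ _ Ru Rv; rewrite Eu Ev => Huv.
by apply/H1; rewrite Eu Ev.
Qed.

End Main.

Lemma foldl_keep (inT : cell -> bool) ps lab c : dim c != 1 ->
  foldl (merge inT) lab ps c = lab c.
Proof.
move=> Hd; elim: ps lab => [|p ps IH] lab //=.
by rewrite IH /merge (negbTE Hd) andbF.
Qed.

Lemma step4_keep (inT : cell -> bool) ord lab lab' : step4 inT ord lab lab' ->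
  (forall x, x \in ord -> dim x = 0) -> forall c, dim c = 2 -> lab' c = lab c.
Proof.
elim=> {ord lab lab'} // t0 ord lab lab' lab'' [ps [_ [_ ->]]] _ IH Hord c Hc.
rewrite IH //; last by move=> x Hx; apply: Hord; rewrite inE Hx orbT.
have Ht0 : c != t0.
  by apply/eqP => E; have := Hord t0; rewrite inE eqxx -E Hc => /(_ isT).
by rewrite (negbTE Ht0) /= foldl_keep // Hc.
Qed.

Theorem proposition2 (n1 n2 n3 : nat) (sigma : cell -> nat)
  (a1 a2 a3 : seq nat) (tau tau' : cell -> nat) :
  0 < n1 -> 0 < n2 -> 0 < n3 ->
  segment_label_map n1 n2 n3 sigma ->
  valid_axis n1 a1 -> valid_axis n2 a2 -> valid_axis n3 a3 ->
  is_LABEL (inbox (Tbox n1 n2 n3)) sigma (inbox (Tbox n1 n2 n3)) tau ->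
  blockwise n1 n2 n3 sigma a1 a2 a3 tau' ->
  iso_on (fun c => inbox (Tbox n1 n2 n3) c && (dim c == 2)) tau tau'.
Proof.
move=> _ _ _ _ Hv1 Hv2 Hv3 Htau.
move=> [bl [lam [rep1 [rep2 [tau3 [ord [tau4 [Hbl [Hlam [_ [Hrep2 [Htau3 [Hord [H4 Ht']]]]]]]]]]]]]].
have I := @iso3 n1 n2 n3 sigma a1 a2 a3 tau bl lam rep1 rep2 tau3 Hv1 Hv2 Hv3 Htau Hbl
  Hlam Hrep2 Htau3.
have E : forall c, inbox (Tbox n1 n2 n3) c && (dim c == 2) -> tau' c = tau3 c.
  move=> c /andP [Hc /eqP Hd]; rewrite Ht' //.
  apply: (step4_keep H4) => // x Hx.
  by move: Hx; rewrite (perm_mem Hord) mem_filter => /andP [/eqP].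
case: I => I1 I2; split.
  by move=> u Hu; rewrite (E u Hu); exact: I1.
by move=> u v Hu Hv; rewrite (E u Hu) (E v Hv); exact: I2.
Qed.
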